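(* Let $G=(V,E)$ be an $r$-rank connected graph and let $X,Y\subseteq V$ be $r$-splits of $G$ with $|X\cap Y|\ge r$. Then $X\cup Y$ is an $r$-split of $G$.
   Context: For $X\subseteq V$, $\overline X=V\setminus X$, and $\rho(X)$ is the rank over $\mathbb F_2$ of the submatrix of the adjacency matrix of $G$ with rows indexed by $X$ and columns by $\overline X$. $X$ is a $k$-split if $\rho(X)\le k$, and trivial if $\rho(X)=\min(|X|,|\overline X|)$. $G$ is $r$-rank connected if every $k$-split with $k<r$ is trivial. *)

(* Defs.v *)
From HB Require Import structures.
From mathcomp Require Import all_boot all_order all_algebra.
Set Implicit Arguments. Unset Strict Implicit. Unset Printing Implicit Defensive.
Import GRing.Theory.
Local Open Scope ring_scope.

Definition simple_graph (V : finType) (adj : rel V) : Prop :=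
  symmetric adj /\ irreflexive adj.

Definition cut_matrix (V : finType) (adj : rel V) (X : {set V})
  : 'M['F_2]_(#|X|, #|~: X|) :=
  \matrix_(i < #|X|, j < #|~: X|) (adj (enum_val i) (enum_val j))%:R.

Definition cutrank (V : finType) (adj : rel V) (X : {set V}) : nat :=
  \rank (cut_matrix adj X).

Definition is_split (V : finType) (adj : rel V) (k : nat) (X : {set V}) : Prop :=
  (cutrank adj X <= k)%N.

Definition trivial_split (V : finType) (adj : rel V) (X : {set V}) : Prop :=
  cutrank adj X = minn #|X| #|~: X|.

Definition rank_connected (V : finType) (adj : rel V) (r : nat) : Prop :=
  forall (k : nat) (X : {set V}), (k < r)%N -> is_split adj k X -> trivial_split adj X.

(* Main.v *)
Require Import Defs.
From mathcomp Require Import all_boot all_order all_algebra.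
From mathcomp Require Import zify.
Set Implicit Arguments. Unset Strict Implicit. Unset Printing Implicit Defensive.
Import GRing.Theory.
Local Open Scope ring_scope.
Section S.
Variable V : finType.
Notation F := 'F_2.
Lemma sum_sel (A : {pred V}) (x : V) (f : V -> F) :
  \sum_(i < #|A|) (enum_val i == x)%:R * f (enum_val i) = if x \in A then f x else 0.
Proof.
case: ifPn => Hx.
  rewrite (bigD1 (enum_rank_in Hx x)) //= enum_rankK_in // eqxx mul1r big1 ?addr0 //.
  move=> i Hi; case: eqP => [E|]; last by rewrite mul0r.
  have Ei : i = enum_rank_in Hx x by apply: enum_val_inj; rewrite enum_rankK_in.
  by rewrite Ei eqxx in Hi.
rewrite big1 // => i _; case: eqP => [E|]; last by rewrite mul0r.
by move: Hx; rewrite -E enum_valP.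
Qed.
Lemma sum_sel' (A : {pred V}) (x : V) (f : V -> F) :
  \sum_(i < #|A|) (x == enum_val i)%:R * f (enum_val i) = if x \in A then f x else 0.
Proof. by rewrite -sum_sel; apply: eq_bigr => i _; rewrite eq_sym. Qed.
Lemma sum_selr (A : {pred V}) (x : V) (f : V -> F) :
  \sum_(i < #|A|) f (enum_val i) * (enum_val i == x)%:R = if x \in A then f x else 0.
Proof. by rewrite -sum_sel; apply: eq_bigr => i _; rewrite mulrC. Qed.
Lemma sum_selr' (A : {pred V}) (x : V) (f : V -> F) :
  \sum_(i < #|A|) f (enum_val i) * (x == enum_val i)%:R = if x \in A then f x else 0.
Proof. by rewrite -sum_sel; apply: eq_bigr => i _; rewrite mulrC eq_sym. Qed.

Definition Pm (X : {set V}) : 'M[F]_(#|X|, #|V|) :=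
  \matrix_(i, j) (enum_val i == enum_val j)%:R.
Variable adj : rel V.
Definition Adj : 'M[F]_#|V| := \matrix_(j, k) (adj (enum_val j) (enum_val k))%:R.

Lemma PAdjE X i k : (Pm X *m Adj) i k = (adj (enum_val i) (enum_val k))%:R.
Proof.
rewrite !mxE.
under eq_bigr do rewrite !mxE.
by rewrite (@sum_sel' _ _ (fun v => (adj v (enum_val k))%:R)) inE.
Qed.
Lemma L1 X : Pm X *m Adj *m (Pm (~:X))^T = cut_matrix adj X.
Proof.
apply/matrixP => i l; rewrite !mxE.
under eq_bigr do rewrite PAdjE !mxE.
by rewrite (@sum_selr' _ _ (fun v => (adj (enum_val i) v)%:R)) inE.
Qed.
Lemma L2 X : Pm X *m (Pm X)^T = 1%:M.
Proof.
apply/matrixP => i l; rewrite !mxE.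
under eq_bigr do rewrite !mxE.
rewrite (@sum_selr' _ _ (fun v => (enum_val i == v)%:R)) inE.
by rewrite (inj_eq enum_val_inj).
Qed.
Lemma L3 X : Pm X *m (Pm (~:X))^T = 0.
Proof.
apply/matrixP => i l; rewrite !mxE.
under eq_bigr do rewrite !mxE.
rewrite (@sum_selr' _ _ (fun v => (enum_val i == v)%:R)) inE.
case: eqP => // E; have := enum_valP l; have := enum_valP i.
by rewrite E inE => ->.
Qed.
Lemma L4 X : (Pm X)^T *m Pm X + (Pm (~:X))^T *m Pm (~:X) = 1%:M.
Proof.
apply/matrixP => j k; rewrite !mxE.
under eq_bigr do rewrite !mxE.
under [X in _ + X = _]eq_bigr do rewrite !mxE.
rewrite (@sum_sel _ _ (fun v => (v == enum_val k)%:R)).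
rewrite (@sum_sel _ _ (fun v => (v == enum_val k)%:R)).
rewrite (inj_eq enum_val_inj) inE.
by case: (enum_val j \in X); rewrite ?addr0 ?add0r.
Qed.
Lemma rankP X : \rank (Pm X) = #|X|.
Proof.
apply/eqP; rewrite eqn_leq rank_leq_row /=.
by rewrite -{1}(mxrank1 F #|X|) -(L2 X) mxrankM_maxl.
Qed.
Lemma rank_cutP X : \rank (cut_matrix adj X *m Pm (~:X)) = cutrank adj X.
Proof.
apply/eqP; rewrite eqn_leq mxrankM_maxl /= /cutrank.
rewrite -{1}(mulmx1 (cut_matrix adj X)) -(L2 (~:X)) mulmxA.
exact: mxrankM_maxl.
Qed.
Lemma disj X : ((cut_matrix adj X *m Pm (~:X)) :&: Pm X)%MS = 0.
Proof.
set W := (_ :&: _)%MS.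
have /submxP [D1 E1] : (W <= cut_matrix adj X *m Pm (~:X))%MS by apply: capmxSl.
have /submxP [D2 E2] : (W <= Pm X)%MS by apply: capmxSr.
have -> : W = W *m (Pm (~:X))^T *m Pm (~:X).
  by rewrite {2}E1 -!mulmxA (mulmxA (Pm (~:X))) L2 mul1mx.
by rewrite {1}E2 -(mulmxA D2) L3 mulmx0 mul0mx.
Qed.
Definition AX X := (Pm X *m Adj + Pm X)%MS.
Lemma AXeq X : (AX X == cut_matrix adj X *m Pm (~:X) + Pm X)%MS.
Proof.
have E : Pm X *m Adj = (Pm X *m Adj *m (Pm X)^T) *m Pm X + cut_matrix adj X *m Pm (~:X).
  by rewrite -L1 -!mulmxA -!mulmxDr L4 mulmx1.
apply/andP; split; rewrite addsmx_sub addsmxSr andbT.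
  by rewrite E addrC addmx_sub_adds // submxMl.
have -> : cut_matrix adj X *m Pm (~:X) = Pm X *m Adj + (- (Pm X *m Adj *m (Pm X)^T)) *m Pm X.
  by rewrite {1}E mulNmx addrC addKr.
by rewrite addmx_sub_adds // submxMl.
Qed.
Lemma rankAX X : \rank (AX X) = (cutrank adj X + #|X|)%N.
Proof. by rewrite (eqmx_rank (AXeq X)) mxrank_disjoint_sum ?disj // rank_cutP rankP. Qed.
Definition ev (x : V) : 'rV[F]_#|V| := \row_j (x == enum_val j)%:R.
Lemma ev_row (X : {set V}) (i : 'I_#|X|) : row i (Pm X) = ev (enum_val i).
Proof. by apply/rowP => j; rewrite !mxE. Qed.
Lemma AX_le (Z : {set V}) m (W : 'M_(m, #|V|)) :
  (forall z, z \in Z -> (ev z <= W)%MS && (ev z *m Adj <= W)%MS) -> (AX Z <= W)%MS.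
Proof.
move=> H; rewrite addsmx_sub; apply/andP; split; apply/row_subP => i.
  by rewrite row_mul ev_row; case/andP: (H _ (enum_valP i)).
by rewrite ev_row; case/andP: (H _ (enum_valP i)).
Qed.
Lemma ev_in (X : {set V}) x : x \in X -> (ev x <= AX X)%MS && (ev x *m Adj <= AX X)%MS.
Proof.
move=> Hx; have -> : ev x = row (enum_rank_in Hx x) (Pm X) by rewrite ev_row enum_rankK_in.
apply/andP; split.
  exact: submx_trans (row_sub _ _) (addsmxSr _ _).
by rewrite -row_mul; exact: submx_trans (row_sub _ _) (addsmxSl _ _).
Qed.
Lemma submod X Y :
  (cutrank adj (X :|: Y) + cutrank adj (X :&: Y) <= cutrank adj X + cutrank adj Y)%N.
Proof.
have H1 : (\rank (AX (X :|: Y)) <= \rank (AX X + AX Y)%MS)%N.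
  apply: mxrankS; apply: AX_le => z; rewrite inE => /orP [] Hz.
    by case/andP: (ev_in Hz) => A B; apply/andP; split; apply: submx_trans (addsmxSl _ _).
  by case/andP: (ev_in Hz) => A B; apply/andP; split; apply: submx_trans (addsmxSr _ _).
have H2 : (\rank (AX (X :&: Y)) <= \rank (AX X :&: AX Y)%MS)%N.
  apply: mxrankS; apply: AX_le => z; rewrite inE => /andP [] Hx Hy.
  case/andP: (ev_in Hx) => A B; case/andP: (ev_in Hy) => C D.
  by rewrite !sub_capmx A B C D.
have := mxrank_sum_cap (AX X) (AX Y).
move: H1 H2; rewrite !rankAX.
have := cardsUI X Y.
lia.
Qed.
End S.

Theorem mainTheorem6 (V : finType) (adj : rel V) (r : nat) (X Y : {set V}) :
  simple_graph adj ->
  rank_connected adj r ->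
  is_split adj r X -> is_split adj r Y ->
  (r <= #|X :&: Y|)%N ->
  is_split adj r (X :|: Y).
Proof.
move=> _ Hrc HX HY Hr; rewrite /is_split in HX HY *.
have Hs := submod adj X Y.
case: (leqP (cutrank adj (X :|: Y)) r) => // Hgt.
have Hk : (cutrank adj (X :&: Y) < r)%N by lia.
have := Hrc _ _ Hk (leqnn _); rewrite /trivial_split => Ht.
have Hc : (cutrank adj (X :|: Y) <= #|~: (X :|: Y)|)%N by apply: rank_leq_col.
have Hsub : (#|~: (X :|: Y)| <= #|~: (X :&: Y)|)%N.
  by apply: subset_leq_card; rewrite setCS; apply/subsetP => z; rewrite !inE => /andP [->].
move: Ht; case: (leqP #|X :&: Y| #|~: (X :&: Y)|) => H; rewrite ?(minn_idPl H) ?(minn_idPr (ltnW H)); lia.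
Qed.
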